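(* Let $\mathcal{A}=\{1,\dots,K\}$ be a finite set of arms, each arm $i$ having a feature vector $\mathbf{x}_i\in\mathbb{R}^d$, and let $\boldsymbol{\theta}\in\mathbb{R}^d$ be an unknown parameter with mean rewards $\mu_i=\mathbf{x}_i^T\boldsymbol{\theta}$ and $\mu_*=\max_{i\in\mathcal{A}}\mu_i$. Fix a round $t$, a positive definite matrix $\mathbf{V}_t\in\mathbb{R}^{d\times d}$, estimates $\hat{\mu}_{i,t}\in\mathbb{R}$ for $i\in\mathcal{A}$, and $\beta>0$ such that $|\hat{\mu}_{i,t}-\mu_i|\le \beta\|\mathbf{x}_i\|_{\mathbf{V}_t^{-1}}$ for all $i\in\mathcal{A}$. Let $i_*\in\arg\max_{i\in\mathcal{A}}\big(\hat{\mu}_{i,t}-\beta\|\mathbf{x}_i\|_{\mathbf{V}_t^{-1}}\big)$, and for each $i\in\mathcal{A}$ define $$S_{i,t}=\beta\big(\|\mathbf{x}_i\|_{\mathbf{V}_t^{-1}}+\|\mathbf{x}_{i_*}\|_{\mathbf{V}_t^{-1}}\big)-\big(\hat{\mu}_{i_*,t}-\hat{\mu}_{i,t}\big).$$ Then: (1) if $S_{i,t}<0$, arm $i$ is suboptimal, i.e. $\mu_*-\mu_i>0$; (2) if $S_{i,t}\ge S_{j,t}\ge 0$, then $\hat{\mu}_{i,t}+\beta\|\mathbf{x}_i\|_{\mathbf{V}_t^{-1}}\ge \hat{\mu}_{j,t}+\beta\|\mathbf{x}_j\|_{\mathbf{V}_t^{-1}}$.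
   Context: For a positive definite matrix $\mathbf{M}$ and vector $\mathbf{x}$, $\|\mathbf{x}\|_{\mathbf{M}}=\sqrt{\mathbf{x}^T\mathbf{M}\mathbf{x}}$. In the paper $\mathbf{V}_t$ is the regularized Gram matrix of selected feature vectors and $\hat{\mu}_{i,t}=\mathbf{x}_i^T\hat{\boldsymbol{\theta}}_t$ with $\hat{\boldsymbol{\theta}}_t$ the least-squares estimate; the lemma only uses that $\mathbf{V}_t$ is positive definite and the stated confidence-bound inequality. *)

(* Defs.v *)
From HB Require Import structures.
From mathcomp Require Import all_boot all_order all_algebra.
Set Implicit Arguments. Unset Strict Implicit. Unset Printing Implicit Defensive.
Import Order.TTheory GRing.Theory Num.Theory.
Local Open Scope ring_scope.

Definition mnorm (R : rcfType) (d : nat) (M : 'M[R]_d) (x : 'cV[R]_d) : R :=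
  Num.sqrt ((x^T *m M *m x) 0 0).

Definition posdef (R : rcfType) (d : nat) (M : 'M[R]_d) : Prop :=
  M^T = M /\ forall x : 'cV[R]_d, x != 0 -> 0 < (x^T *m M *m x) 0 0.

Definition mean_reward (R : rcfType) (d : nat) (x : 'cV[R]_d) (theta : 'cV[R]_d) : R :=
  (x^T *m theta) 0 0.

(* mu_* = max over the K = n.+1 arms *)
Definition mu_star (R : rcfType) (n : nat) (mu : 'I_n.+1 -> R) : R :=
  \big[Num.max/mu ord0]_(i < n.+1) mu i.

(* Main.v *)
Require Import Defs.
From HB Require Import structures.
From mathcomp Require Import all_boot all_order all_algebra.
Import Order.TTheory GRing.Theory Num.Theory.
Local Open Scope ring_scope.
From mathcomp Require Import lra.

Lemma bms (R : realDomainType) (I : eqType) (r : seq I) (F : I -> R) a k :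
  k \in r -> F k <= \big[Num.max/a]_(i <- r) F i.
Proof.
elim: r => [|j r IH]; first by rewrite in_nil.
rewrite big_cons inE => /orP[/eqP->|/IH h]; first by rewrite le_max lexx.
by rewrite le_max h orbT.
Qed.
Lemma bm (R : realDomainType) n (F : 'I_n.+1 -> R) a k : F k <= \big[Num.max/a]_(i < n.+1) F i.
Proof. exact/bms/mem_index_enum. Qed.


Theorem lemma1 (R : rcfType) (d n : nat)
  (x : 'I_n.+1 -> 'cV[R]_d) (theta : 'cV[R]_d) (V : 'M[R]_d)
  (muhat : 'I_n.+1 -> R) (beta : R) (istar : 'I_n.+1) :
  posdef V ->
  0 < beta ->
  (forall i, `|muhat i - mean_reward (x i) theta| <= beta * mnorm (invmx V) (x i)) ->
  (forall j, muhat j - beta * mnorm (invmx V) (x j)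
             <= muhat istar - beta * mnorm (invmx V) (x istar)) ->
  let S := fun i => beta * (mnorm (invmx V) (x i) + mnorm (invmx V) (x istar))
                    - (muhat istar - muhat i) in
  (forall i, S i < 0 ->
     mu_star (fun k => mean_reward (x k) theta) - mean_reward (x i) theta > 0) /\
  (forall i j, S j <= S i -> 0 <= S j ->
     muhat j + beta * mnorm (invmx V) (x j) <= muhat i + beta * mnorm (invmx V) (x i)).
Proof.
move=> _ bpos Hc Hstar S; split => [i|i j]; rewrite /S.
- move=> Hs.
  have h1 := Hc i; have h2 := Hc istar.
  have m := @bm _ _ (fun k => mean_reward (x k) theta) (mean_reward (x ord0) theta) istar.
  rewrite /mu_star.
  move: h1 h2 m Hs.
  set a := mnorm _ (x i); set b := mnorm _ (x istar).
  set mi := mean_reward (x i) theta; set ms := mean_reward (x istar) theta.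
  set B := \big[_/_]_(_ < _) _.
  move=> h1 h2 m Hs.
  move: h1 h2; rewrite !ler_norml => /andP[h1 h1'] /andP[h2 h2'].
  lra.
- lra.
Qed.
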